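(* Let $G$ be a group and $\rho,\phi,\psi\in H^1(G;\mathbb{F}_2)$. Let $K=\mathrm{Ker}(\rho)$ and $L=K\cap\mathrm{Ker}(\phi)$. Then: (2) the canonical projections induce isomorphisms $H^1(G/X^2(K);\mathbb{F}_2)\cong H^1(G/X^2(L);\mathbb{F}_2)\cong H^1(G/X^4(G);\mathbb{F}_2)\cong H^1(G;\mathbb{F}_2)$; (3) $\rho\phi=0$ in $H^2(G;\mathbb{F}_2)$ if and only if $\rho\phi=0$ in $H^2(G/X^2(K);\mathbb{F}_2)$; (4) $\phi^2=\rho\phi+\rho\psi$ in $H^2(G;\mathbb{F}_2)$ if and only if $\phi^2=\rho\phi+\rho\psi$ in $H^2(G/X^2(L);\mathbb{F}_2)$.
   Context: For a group $H$, $X^n(H)=\langle h^n\mid h\in H\rangle$ is the subgroup generated by all $n$-th powers. In (3) and (4), classes in $H^1$ of the quotient groups are identified with classes in $H^1(G;\mathbb{F}_2)$ via the isomorphisms of (2). Products are cup products. *)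

(* Defs.v *)
From HB Require Import structures.
From mathcomp Require Import all_boot all_order all_algebra.
From mathcomp Require Import monoid.
Set Implicit Arguments. Unset Strict Implicit. Unset Printing Implicit Defensive.
Import GRing.Theory.

Local Open Scope ring_scope.

(* A class in H^1(G;F_2) = Hom(G, F_2) (trivial coefficients, so 1-coboundaries
   vanish and H^1 is the group of homomorphisms). *)
Definition hom1 (G : groupType) (f : G -> 'F_2) : Prop :=
  forall x y : G, f (x * y)%g = f x + f y.

Inductive gen_subgroup (G : groupType) (S : G -> Prop) : G -> Prop :=
  | gen_in x : S x -> gen_subgroup S x
  | gen_one : gen_subgroup S 1%g
  | gen_mul x y : gen_subgroup S x -> gen_subgroup S y -> gen_subgroup S (x * y)%g
  | gen_inv x : gen_subgroup S x -> gen_subgroup S (x^-1)%g.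

Definition Xpow (G : groupType) (n : nat) (H : G -> Prop) : G -> Prop :=
  gen_subgroup (fun x => exists2 h, H h & x = (h ^+ n)%g).

(* p : G -> Q is (a model of) the canonical projection G -> G/N:
   a surjective group homomorphism with kernel exactly N. *)
Definition quotient_map (G Q : groupType) (p : G -> Q) (N : G -> Prop) : Prop :=
  [/\ forall x y : G, p (x * y)%g = (p x * p y)%g,
      forall q : Q, exists g : G, p g = q
    & forall g : G, p g = 1%g <-> N g].

Definition inflation1_bij (G Q : groupType) (p : G -> Q) : Prop :=
  (forall f : G -> 'F_2, hom1 f -> exists2 a : Q -> 'F_2, hom1 a & forall g, a (p g) = f g)
  /\ (forall a b : Q -> 'F_2, hom1 a -> hom1 b ->
        (forall g, a (p g) = b (p g)) -> a = b).

Definition cochain2 (G : groupType) := G -> G -> 'F_2.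

Definition coboundary2 (G : groupType) (f : cochain2 G) : Prop :=
  exists c : G -> 'F_2, forall g h : G, f g h = c h - c (g * h)%g + c g.

Definition cohomologous2 (G : groupType) (f1 f2 : cochain2 G) : Prop :=
  coboundary2 (fun g h => f1 g h - f2 g h).

Definition cup11 (G : groupType) (a b : G -> 'F_2) : cochain2 G :=
  fun g h => a g * b h.

Definition add2 (G : groupType) (f1 f2 : cochain2 G) : cochain2 G :=
  fun g h => f1 g h + f2 g h.

(* Main.v *)
Require Import Defs.
From HB Require Import structures.
From mathcomp Require Import all_boot all_order all_algebra.
From mathcomp Require Import monoid.
From mathcomp Require Import ring.
From Stdlib Require Import IndefiniteDescription FunctionalExtensionality.
Import GRing.Theory.
Local Open Scope ring_scope.
Set Implicit Arguments.

Lemma F2xx (x : 'F_2) : x + x = 0.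
Proof. rewrite -mulr2n -mulr_natr. have ->: (2%:R : 'F_2) = 0 by rewrite -(@Fp_nat_mod 2). by rewrite mulr0. Qed.

Lemma F2eq (a b : 'F_2) : a + b = 0 -> a = b.
Proof. by move=> h; rewrite -[b]add0r -h -addrA F2xx addr0. Qed.

Lemma F2sol (a b d : 'F_2) : 0 = a - b + d -> b = a + d.
Proof. move=> h; have ->: b = b + (a - b + d) by rewrite -h addr0. ring. Qed.

Lemma hom1_1 (G : groupType) (f : G -> 'F_2) : hom1 f -> f 1%g = 0.
Proof.
move=> hf; have := hf 1%g 1%g; rewrite mul1g => e.
have: f 1%g + f 1%g = f 1%g + 0 by rewrite addr0 -e.
by move/addrI.
Qed.

Lemma hom1_V (G : groupType) (f : G -> 'F_2) x : hom1 f -> f (x^-1)%g = f x.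
Proof.
move=> hf; have := hf x (x^-1)%g; rewrite mulgV (hom1_1 hf) => e.
by symmetry; apply: F2eq; rewrite -e.
Qed.

Lemma hom1_X (G : groupType) (f : G -> 'F_2) x n : hom1 f -> f (x ^+ n)%g = f x *+ n.
Proof.
move=> hf; elim: n => [|n IH]; first by rewrite expg0 hom1_1.
by rewrite expgS hf IH mulrS.
Qed.

Lemma hom_pow2 (G : groupType) (f : G -> 'F_2) x : hom1 f -> f (x ^+ 2)%g = 0.
Proof. by move=> hf; rewrite hom1_X // mulr2n F2xx. Qed.

Lemma hom_pow4 (G : groupType) (f : G -> 'F_2) x : hom1 f -> f (x ^+ 4)%g = 0.
Proof.
move=> hf; rewrite hom1_X //.
by rewrite (_ : 4%N = 2 * 2)%N // mulrnA mulr2n F2xx.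
Qed.

Lemma hom_Xpow (G : groupType) (f : G -> 'F_2) n (H : G -> Prop) :
  hom1 f -> (forall x, f (x ^+ n)%g = 0) -> forall g, Xpow n H g -> f g = 0.
Proof.
move=> hf hn g; elim => [x [h _ ->]||x y _ ex _ ey|x _ ex].
- exact: hn.
- exact: hom1_1.
- by rewrite hf ex ey addr0.
- by rewrite hom1_V.
Qed.

Lemma qm1 (G Q : groupType) (p : G -> Q) N : quotient_map p N -> p 1%g = 1%g.
Proof.
case=> hp _ _; have := hp 1%g 1%g; rewrite mul1g => e.
by apply: (@mulgI _ (p 1%g)); rewrite mulg1 -e.
Qed.

Lemma qmV (G Q : groupType) (p : G -> Q) N x : quotient_map p N -> p (x^-1)%g = ((p x)^-1)%g.
Proof.
move=> q; have [hp _ _] := q; have := hp x (x^-1)%g; rewrite mulgV (qm1 q) => e.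
by symmetry; apply: mulg1_eq; rewrite -e.
Qed.

Lemma descend (G Q : groupType) (p : G -> Q) N (T : Type) (c : G -> T) :
  quotient_map p N -> (forall g n, N n -> c (g * n)%g = c g) ->
  forall g g', p g = p g' -> c g = c g'.
Proof.
move=> q hc g g' e; have [hp _ hN] := q.
rewrite -(mulVKg g g') hc //; apply/hN.
by rewrite hp (qmV _ q) e mulVg.
Qed.

Lemma section (G Q : groupType) (p : G -> Q) N : quotient_map p N ->
  exists s : Q -> G, forall q, p (s q) = q.
Proof.
case=> _ hs _.
exists (fun q => proj1_sig (constructive_indefinite_description _ (hs q))).
by move=> q; case: (constructive_indefinite_description _ (hs q)).
Qed.

Lemma infl (G Q : groupType) (p : G -> Q) N : quotient_map p N ->
  (forall f : G -> 'F_2, hom1 f -> forall n, N n -> f n = 0) -> inflation1_bij p.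
Proof.
move=> q hN; have [hp hsu _] := q; have [s hs] := section q.
split.
- move=> f hf.
  have hc : forall g g', p g = p g' -> f g = f g'.
    apply: (@descend _ _ p N _ f q) => g n Nn; by rewrite hf (hN f hf n Nn) addr0.
  exists (fun q => f (s q)).
  + move=> q1 q2; rewrite -hf; apply: hc; by rewrite hp !hs.
  + by move=> g; apply: hc; rewrite hs.
- move=> a b _ _ e; apply: functional_extensionality => x.
  by rewrite -(hs x) e.
Qed.

Lemma fiberX (G : groupType) (H : G -> Prop) (F : cochain2 G) (c : G -> 'F_2) :
  H 1%g -> (forall x y, H x -> H y -> H (x * y)%g) -> (forall x, H x -> H (x^-1)%g) ->
  (forall x y, H x -> F x y = 0) -> (forall g h, F g h = c h - c (g * h)%g + c g) ->
  forall n, Xpow 2 H n -> H n /\ c n = 0.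
Proof.
move=> H1 HM HV HF hc.
have key : forall x y, H x -> c (x * y)%g = c y + c x.
  by move=> x y Hx; apply: F2sol; rewrite -hc HF.
have c1 : c 1%g = 0.
  by have := key 1%g 1%g H1; rewrite mul1g F2xx.
move=> n; elim => [x [h Hh ->]||x y _ [Hx ex] _ [Hy ey]|x _ [Hx ex]].
- by rewrite expg2; split; [exact: HM|rewrite key // F2xx].
- by split.
- by split; [exact: HM|rewrite key // ex ey addr0].
- split; first exact: HV.
  by have := key x (x^-1)%g Hx; rewrite mulgV c1 ex addr0.
Qed.

Lemma transfer (G Q : groupType) (p : G -> Q) (H : G -> Prop) (F : cochain2 G)
  (FQ : cochain2 Q) :
  quotient_map p (Xpow 2 H) ->
  H 1%g -> (forall x y, H x -> H y -> H (x * y)%g) -> (forall x, H x -> H (x^-1)%g) ->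
  (forall x y, H x -> F x y = 0) -> (forall g n, Xpow 2 H n -> F g n = 0) ->
  (forall g h, FQ (p g) (p h) = F g h) ->
  (coboundary2 F <-> coboundary2 FQ).
Proof.
move=> q H1 HM HV HF1 HF2 hFQ; have [hp _ _] := q; have [s hs] := section q.
split.
- case=> c hc.
  have cN : forall g n, Xpow 2 H n -> c (g * n)%g = c g.
    move=> g n Nn; have [_ cn] := @fiberX G H F c H1 HM HV HF1 hc n Nn.
    by have := F2sol (etrans (esym (HF2 g n Nn)) (hc g n)); rewrite cn add0r.
  exists (fun q => c (s q)) => q1 q2.
  have := hFQ (s q1) (s q2); rewrite !hs => ->; rewrite hc.
  congr (_ - _ + _); apply: (@descend _ _ p _ _ c q cN); by rewrite hp !hs.
- case=> c hc; exists (fun g => c (p g)) => g h.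
  by rewrite -hFQ hc hp.
Qed.

Unset Implicit Arguments.

Theorem lemma4 (G : groupType) (rho phi psi : G -> 'F_2)
  (hrho : hom1 rho) (hphi : hom1 phi) (hpsi : hom1 psi) :
  let K := fun g : G => rho g = 0 in
  let L := fun g : G => K g /\ phi g = 0 in
  (* (2) *)
  [/\ (forall (Q : groupType) (p : G -> Q),
         quotient_map p (Xpow 2 K) -> inflation1_bij p),
      (forall (Q : groupType) (p : G -> Q),
         quotient_map p (Xpow 2 L) -> inflation1_bij p)
    & (forall (Q : groupType) (p : G -> Q),
         quotient_map p (Xpow 4 (fun _ : G => True)) -> inflation1_bij p)]
  (* (3) *)
  /\ (forall (Q : groupType) (p : G -> Q), quotient_map p (Xpow 2 K) ->
        forall rb pb : Q -> 'F_2, hom1 rb -> hom1 pb ->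
        (forall g, rb (p g) = rho g) -> (forall g, pb (p g) = phi g) ->
        (coboundary2 (cup11 rho phi) <-> coboundary2 (cup11 rb pb)))
  (* (4) *)
  /\ (forall (Q : groupType) (p : G -> Q), quotient_map p (Xpow 2 L) ->
        forall rb pb sb : Q -> 'F_2, hom1 rb -> hom1 pb -> hom1 sb ->
        (forall g, rb (p g) = rho g) -> (forall g, pb (p g) = phi g) ->
        (forall g, sb (p g) = psi g) ->
        (cohomologous2 (cup11 phi phi) (add2 (cup11 rho phi) (cup11 rho psi))
         <-> cohomologous2 (cup11 pb pb) (add2 (cup11 rb pb) (cup11 rb sb)))).
Proof.
move=> K L.
have van2 : forall (f : G -> 'F_2) (H : G -> Prop) n, hom1 f -> Xpow 2 H n -> f n = 0.
  move=> f H n hf; apply: hom_Xpow => // x; exact: hom_pow2.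
have K1 : K 1%g by rewrite /K hom1_1.
have KM : forall x y, K x -> K y -> K (x * y)%g.
  by rewrite /K => x y ex ey; rewrite hrho ex ey addr0.
have KV : forall x, K x -> K (x^-1)%g by rewrite /K => x ex; rewrite hom1_V.
have L1 : L 1%g by split; [|rewrite hom1_1].
have LM : forall x y, L x -> L y -> L (x * y)%g.
  by move=> x y [kx ex] [ky ey]; split; [exact: KM|rewrite hphi ex ey addr0].
have LV : forall x, L x -> L (x^-1)%g.
  by move=> x [kx ex]; split; [exact: KV|rewrite hom1_V].
split; [split|split].
- move=> Q p q; apply: (infl q) => f hf n; exact: van2.
- move=> Q p q; apply: (infl q) => f hf n; exact: van2.
- move=> Q p q; apply: (infl q) => f hf n; apply: hom_Xpow => // x; exact: hom_pow4.
- move=> Q p q rb pb _ _ hrb hpb.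
  apply: (@transfer G Q p K (cup11 rho phi) (cup11 rb pb) q K1 KM KV).
  + by move=> x y kx; rewrite /cup11 kx mul0r.
  + by move=> g n Nn; rewrite /cup11 (van2 phi _ n hphi Nn) mulr0.
  + by move=> g h; rewrite /cup11 hrb hpb.
- move=> Q p q rb pb sb _ _ _ hrb hpb hsb.
  rewrite /cohomologous2.
  apply: (@transfer G Q p L _ _ q L1 LM LV).
  + move=> x y [kx ex]; rewrite /cup11 /add2 kx ex !mul0r; ring.
  + move=> g n Nn; rewrite /cup11 /add2 (van2 phi _ n hphi Nn) (van2 psi _ n hpsi Nn).
    rewrite !mulr0; ring.
  + by move=> g h; rewrite /cup11 /add2 hrb !hpb hsb.
Qed.
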